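(* $\mathtt{incl}$-$\mathtt{ESO}$-$\mathtt{HORN}=\mathtt{Trellis}$.
   Context: Fix a finite alphabet $\Sigma$. A nonempty word $w=w_1\cdots w_n$ is represented by the structure $\langle w\rangle=([1,n];(Q_s)_{s\in\Sigma},\mathtt{min},\mathtt{max},\mathtt{suc},\mathtt{pred})$ with $Q_s(i)\iff w_i=s$, $\mathtt{min}(i)\iff i=1$, $\mathtt{max}(i)\iff i=n$, $\mathtt{suc}(i)=\min(i+1,n)$, $\mathtt{pred}(i)=\max(i-1,1)$. For an integer $a$, $x+a$ denotes $\mathtt{suc}^a(x)$ if $a\ge0$ and $\mathtt{pred}^{-a}(x)$ if $a<0$; $y-b=\mathtt{pred}^b(y)$. An inclusion Horn formula is $\Phi=\exists\mathbf{R}\forall x\forall y\,\psi(x,y)$, $\mathbf{R}$ a finite set of binary relation symbols, $\psi$ a conjunction of Horn clauses over the signature $\{(Q_s)_{s\in\Sigma},\mathtt{min},\mathtt{max},\mathtt{suc},\mathtt{pred}\}\cup\mathbf{R}\cup\{=,\le,<\}$, each of the form $x\le y\wedge\delta_1\wedge\cdots\wedge\delta_r\to\delta_0$ with $\delta_0$ an atom $R(x,y)$ ($R\in\mathbf{R}$) or $\bot$, and each $\delta_i$ one of: $U(x+a)$, $\neg U(x+a)$, $U(y+a)$, $\neg U(y+a)$ for $U\in\{(Q_s)_{s\in\Sigma},\mathtt{min},\mathtt{max}\}$ and $a\in\mathbb Z$; $x=y$ or $x<y$; a conjunction $S(x+a,y-b)\wedge x+a\le y-b$ with $S\in\mathbf{R}$,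 integers $a,b\ge0$. $\mathtt{incl}$-$\mathtt{ESO}$-$\mathtt{HORN}$ is the class of languages $\{w\in\Sigma^+:\langle w\rangle\models\Phi\}$ for such $\Phi$. A one-way cellular automaton (OCA) is $(Q,\Sigma,Q_{accept},\mathcal N,\delta)$ with finite $Q\supseteq\Sigma$, $Q_{accept}\subseteq Q$, $\mathcal N=\{-1,0\}$, $\delta:Q^2\to Q$. On input $w=w_1\cdots w_n$ it works on cells $1,\dots,n$ (cells outside are permanently in a state $\sharp$), with parallel input $\langle c,1\rangle=w_c$ and $\langle c,t\rangle=\delta(\langle c-1,t-1\rangle,\langle c,t-1\rangle)$ for $t>1$, where $\langle c,t\rangle$ is the state of cell $c$ at time $t$. $\mathtt{Trellis}$ is the class of languages $L\subseteq\Sigma^+$ accepted in real time by such an automaton, i.e. such that $w\in L\iff\langle n,n\rangle\in Q_{accept}$ for every $w$ of length $n$ (equivalently, languages accepted by trellis automata). *)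

(* Defs.v *)
From Stdlib Require List.
From mathcomp Require Import all_boot all_order all_algebra.
Set Implicit Arguments. Unset Strict Implicit. Unset Printing Implicit Defensive.

(* Words are sequences over a finite alphabet [Sigma]; positions are 1..n.
   A language is a predicate on words; languages of the paper are subsets of
   Sigma^+ (the empty word never belongs to them). *)
Definition language (Sigma : finType) := seq Sigma -> Prop.

Section Word.
Variables (Sigma : finType) (w : seq Sigma).
Let n := size w.

Definition in_dom (i : nat) : bool := (1 <= i <= n)%N.
Definition suc (i : nat) : nat := minn i.+1 n.
Definition prd (i : nat) : nat := maxn i.-1 1.

Definition shift (i : nat) (a : int) : nat :=
  match a with
  | Posz k => iter k suc i
  | Negz k => iter k.+1 prd i   (* Negz k = -(k+1) *)
  end.
Definition shiftm (i : nat) (b : nat) : nat := iter b prd i.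
End Word.

Inductive upred (Sigma : finType) :=
| UQ of Sigma
| Umin
| Umax.

Definition upred_sat (Sigma : finType) (w : seq Sigma) (U : upred Sigma) (i : nat) : bool :=
  match U with
  | UQ s => onth w i.-1 == Some s
  | Umin => i == 1%N
  | Umax => i == size w
  end.

(* Hypothesis literals delta_i of an inclusion Horn clause, over relation
   symbols 'I_k. The bool is the polarity (true = positive literal). *)
Inductive hlit (Sigma : finType) (k : nat) :=
| LX of upred Sigma & int & bool
| LY of upred Sigma & int & bool
| LEq
| LLt
| LRel of 'I_k & nat & nat.           (* S(x+a, y-b) /\ x+a <= y-b, a,b >= 0 *)

(* A Horn clause  x <= y /\ delta_1 /\ ... /\ delta_r -> delta_0 ;
   head None = bottom, head (Some R) = R(x,y). *)
Record hclause (Sigma : finType) (k : nat) := HClause {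
  hyps : seq (hlit Sigma k);
  head : option 'I_k }.

(* An inclusion Horn formula  exists R forall x forall y psi(x,y),
   with R = {R_0, ..., R_{k-1}} binary relation symbols. *)
Record incl_horn (Sigma : finType) := InclHorn {
  nrel : nat;
  clauses : seq (hclause Sigma nrel) }.

Section Semantics.
Variables (Sigma : finType) (w : seq Sigma) (k : nat)
          (R : 'I_k -> nat -> nat -> Prop).

Definition pol (b : bool) (P : bool) : Prop := if b then P else ~~ P.

Definition hlit_sat (x y : nat) (l : hlit Sigma k) : Prop :=
  match l with
  | LX U a b => pol b (upred_sat w U (shift w x a))
  | LY U a b => pol b (upred_sat w U (shift w y a))
  | LEq => x = y
  | LLt => (x < y)%N
  | LRel Rs a b =>
      R Rs (shift w x (Posz a)) (shiftm y b) /\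
      (shift w x (Posz a) <= shiftm y b)%N
  end.

Definition hclause_sat (x y : nat) (c : hclause Sigma k) : Prop :=
  (x <= y)%N -> (forall l, List.In l (hyps c) -> hlit_sat x y l) ->
  match head c with
  | None => False
  | Some Rs => R Rs x y
  end.
End Semantics.

Definition models (Sigma : finType) (w : seq Sigma) (Phi : incl_horn Sigma) : Prop :=
  exists R : 'I_(nrel Phi) -> nat -> nat -> Prop,
    forall x y, in_dom w x -> in_dom w y ->
      forall c, List.In c (clauses Phi) -> hclause_sat w R x y c.

Definition inclESOHORN (Sigma : finType) (L : language Sigma) : Prop :=
  ~ L [::] /\
  exists Phi : incl_horn Sigma, forall w, w <> [::] -> (L w <-> models w Phi).

Record OCA (Sigma : finType) := MkOCA {
  state : finType;
  inp : Sigma -> state;            (* Q contains Sigma *)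
  inp_inj : injective inp;
  accepting : pred state;
  sharp : state;                   (* permanent state of cells outside [1,n] *)
  delta : state -> state -> state  (* neighbourhood {-1, 0} *)
}.

Section OCASem.
Variables (Sigma : finType) (A : OCA Sigma) (w : seq Sigma).

(* cfg t c = <c, t+1> *)
Fixpoint cfg (t : nat) (c : nat) : state A :=
  match t with
  | 0 => if in_dom w c then
           match onth w c.-1 with Some s => @inp _ A s | None => @sharp _ A end
         else @sharp _ A
  | t'.+1 => if in_dom w c then @delta _ A (cfg t' c.-1) (cfg t' c) else @sharp _ A
  end.

(* accepted in real time: <n, n> in Q_accept *)
Definition oca_accepts : Prop := @accepting _ A (cfg (size w).-1 (size w)).
End OCASem.

Definition Trellis (Sigma : finType) (L : language Sigma) : Prop :=
  ~ L [::] /\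
  exists A : OCA Sigma, forall w, w <> [::] -> (L w <-> oca_accepts A w).

(* Main.v *)
Require Import Defs.
From mathcomp Require Import all_boot all_order all_algebra.
From mathcomp Require Import zify.
From Stdlib Require Import ClassicalEpsilon.
Set Implicit Arguments. Unset Strict Implicit. Unset Printing Implicit Defensive.

Lemma shift_pos (S : finType) (w : seq S) i k :
  i <= size w -> shift w i (Posz k) = minn (i + k) (size w).
Proof.
move=> hi; rewrite /shift; elim: k => [|k IH]; first by rewrite /=; lia.
by rewrite iterS IH /suc; lia.
Qed.

Lemma iter_prd i m :
  1 <= i -> iter m prd i = if m is 0 then i else maxn (i - m) 1.
Proof.
move=> hi; elim: m => [|m IH] //=.
rewrite IH /prd; case: m {IH} => [|m] /=; lia.
Qed.

Lemma shift_neg (S : finType) (w : seq S) i k :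
  1 <= i -> shift w i (Negz k) = maxn (i - k.+1) 1.
Proof. by move=> hi; rewrite /shift iter_prd. Qed.

Lemma shiftm_E i b :
  1 <= i -> shiftm i b = maxn (i - b) 1.
Proof. by move=> hi; rewrite /shiftm iter_prd //; case: b => //; lia. Qed.

Lemma onth_take (T : Type) (s : seq T) m i :
  onth (take m s) i = if i < m then onth s i else None.
Proof.
rewrite !onthE map_take; case: ltnP => h; first by rewrite nth_take.
by rewrite nth_default // size_take size_map; case: ifP; lia.
Qed.

Lemma onth_drop (T : Type) (s : seq T) d i :
  onth (drop d s) i = onth s (d + i).
Proof. by rewrite !onthE map_drop nth_drop. Qed.

Section Horn.
Variables (Sigma : finType) (Phi : incl_horn Sigma).
Local Notation k := (nrel Phi).
Definition Rel := 'I_k -> nat -> nat -> Prop.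

Definition closedR (w : seq Sigma) (R : Rel) :=
  forall c r x y, List.In c (clauses Phi) -> Defs.head c = Some r ->
  in_dom w x -> in_dom w y -> x <= y ->
  (forall l, List.In l (hyps c) -> hlit_sat w R x y l) -> R r x y.
Definition LM (w : seq Sigma) : Rel := fun r x y => forall R, closedR w R -> R r x y.
Definition fires (w : seq Sigma) x y := exists c, List.In c (clauses Phi) /\ Defs.head c = None /\
  forall l, List.In l (hyps c) -> hlit_sat w (LM w) x y l.

Lemma hlit_mono (w : seq Sigma) (R R' : Rel) x y l :
  (forall r a b, R r a b -> R' r a b) -> hlit_sat w R x y l -> hlit_sat w R' x y l.
Proof. by move=> H; case: l => //= s a b [h1 h2]; split => //; apply: H. Qed.

Lemma LM_closed (w : seq Sigma) : closedR w (LM w).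
Proof.
move=> c r x y Hc Hh hx hy hxy Hl R HR.
apply: (HR c) => // l Hl'; apply: hlit_mono (Hl _ Hl') => r' a b; exact.
Qed.

Lemma models_LM (w : seq Sigma) : models w Phi <->
  forall x y, in_dom w x -> in_dom w y -> x <= y -> ~ fires w x y.
Proof.
split.
- move=> [R HR] x y hx hy hxy [c [Hc [Hn Hl]]].
  have cl : closedR w R.
    move=> c' r x' y' Hc' Hh hx' hy' hxy' Hl'.
    by have := HR x' y' hx' hy' c' Hc' hxy' Hl'; rewrite Hh.
  have := HR x y hx hy c Hc hxy; rewrite Hn; apply => l Hl'.
  by apply: hlit_mono (Hl _ Hl') => r a b; apply.
- move=> H; exists (LM w) => x y hx hy c Hc hxy Hl.
  case E: (Defs.head c) => [r|]; first exact: (LM_closed Hc E).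
  by apply: (H x y hx hy hxy); exists c.
Qed.

Definition lit_bnd K (l : hlit Sigma k) : Prop :=
  match l with
  | LX _ a _ | LY _ a _ => (absz a <= K)%N
  | LRel _ a b => (a <= K)%N /\ (b <= K)%N
  | _ => True end.

Definition litsz (l : hlit Sigma k) : nat :=
  match l with
  | LX _ a _ | LY _ a _ => absz a
  | LRel _ a b => maxn a b
  | _ => 0 end.

Lemma foldr_max_ge (A : Type) (f : A -> nat) (s : seq A) x :
  List.In x s -> f x <= foldr (fun y m => maxn (f y) m) 0 s.
Proof. elim: s => //= y s IH [->|/IH]; lia. Qed.

Lemma bound_exists : exists K, forall c l, List.In c (clauses Phi) ->
  List.In l (hyps c) -> lit_bnd K l.
Proof.
pose fc (c : hclause Sigma k) := foldr (fun l m => maxn (litsz l) m) 0 (hyps c).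
exists (foldr (fun c m => maxn (fc c) m) 0 (clauses Phi)) => c l Hc Hl.
have h1 := foldr_max_ge fc Hc.
have h2 : litsz l <= fc c by apply: foldr_max_ge.
case: l Hl h2 => //= *; lia.
Qed.

Definition corr K (w w' : seq Sigma) x y x' y' (Q : nat -> nat -> nat -> nat -> Prop) : Prop :=
  (forall U a, (absz a <= K)%N ->
     upred_sat w U (shift w x a) = upred_sat w' U (shift w' x' a)) /\
  (forall U a, (absz a <= K)%N ->
     upred_sat w U (shift w y a) = upred_sat w' U (shift w' y' a)) /\
  (x = y <-> x' = y') /\ (x < y) = (x' < y') /\
  (forall a b, a <= K -> b <= K ->
     (shift w x (Posz a) <= shiftm y b) = (shift w' x' (Posz a) <= shiftm y' b) /\
     ((shift w x (Posz a) <= shiftm y b) ->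
        Q (shift w x (Posz a)) (shiftm y b) (shift w' x' (Posz a)) (shiftm y' b))).

Lemma lit_corr K (w w' : seq Sigma) (R R' : Rel) x y x' y' Q l :
  corr K w w' x y x' y' Q ->
  (forall s a b c d, Q a b c d -> R s a b -> R' s c d) ->
  lit_bnd K l -> hlit_sat w R x y l -> hlit_sat w' R' x' y' l.
Proof.
move=> [c1 [c2 [c3 [c4 c5]]]] HQ.
case: l => /= [U a b|U a b||| s a b] Hb.
- by rewrite (c1 U a Hb).
- by rewrite (c2 U a Hb).
- by move/c3.
- by rewrite c4.
- move=> [H1 H2]; have [E F] := c5 a b Hb.1 Hb.2.
  by split; [exact: HQ _ _ _ _ _ (F H2) H1 | rewrite -E].
Qed.

Lemma corr_sym K (w w' : seq Sigma) x y x' y' Q :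
  corr K w w' x y x' y' Q -> corr K w' w x' y' x y (fun a b c d => Q c d a b).
Proof.
move=> [c1 [c2 [c3 [c4 c5]]]]; split; [|split; [|split; [|split]]].
- by move=> U a h; rewrite c1.
- by move=> U a h; rewrite c2.
- by split => /c3.
- by rewrite c4.
- move=> a b ha hb; have [E F] := c5 a b ha hb; split; first by rewrite E.
  by rewrite -E; apply: F.
Qed.

Lemma corr_mono K (w w' : seq Sigma) x y x' y' (Q Q' : nat -> nat -> nat -> nat -> Prop) :
  (forall a b c d, Q a b c d -> Q' a b c d) ->
  corr K w w' x y x' y' Q -> corr K w w' x y x' y' Q'.
Proof.
move=> HQ [c1 [c2 [c3 [c4 c5]]]]; do 4 (split => //).
move=> a b ha hb; have [E F] := c5 a b ha hb; split => // h; exact/HQ/F.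
Qed.

Section WithK.
Variable K : nat.
Hypothesis HK : forall c l, List.In c (clauses Phi) ->
  List.In l (hyps c) -> lit_bnd K l.

Lemma LM_corr1 (w w' : seq Sigma) (G : nat -> nat -> nat -> nat -> Prop) :
  (forall x y x' y', G x y x' y' -> in_dom w' x' /\ in_dom w' y' /\ x' <= y' /\
     corr K w w' x y x' y' (fun a b c d => G a b c d \/
                                           forall s, LM w s a b <-> LM w' s c d)) ->
  forall r x y, LM w r x y -> forall x' y', G x y x' y' -> LM w' r x' y'.
Proof.
move=> HG r x y H.
pose P : Rel := fun s a b => LM w s a b /\ forall c d, G a b c d -> LM w' s c d.
suff: P r x y by case.
apply: H => c s a b Hc Hh ha hb hab Hl; split.
- apply: (LM_closed Hc Hh ha hb hab) => l Hl'.
  by apply: hlit_mono (Hl _ Hl') => ??? [].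
- move=> a' b' HGa; have [ha' [hb' [hab' Hco]]] := HG _ _ _ _ HGa.
  apply: (LM_closed Hc Hh ha' hb' hab') => l Hl'.
  apply: (lit_corr Hco _ (HK Hc Hl') (Hl _ Hl')).
  by move=> s' a1 b1 c1 d1 [HG1|Hiff] [HP1 HP2]; [exact: HP2 | exact/Hiff].
Qed.

Lemma LM_corr (w w' : seq Sigma) (G : nat -> nat -> nat -> nat -> Prop) :
  (forall x y x' y', G x y x' y' ->
     in_dom w x /\ in_dom w y /\ x <= y /\
     in_dom w' x' /\ in_dom w' y' /\ x' <= y' /\
     corr K w w' x y x' y' (fun a b c d => G a b c d \/
                                           forall s, LM w s a b <-> LM w' s c d)) ->
  forall r x y x' y', G x y x' y' -> (LM w r x y <-> LM w' r x' y').
Proof.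
move=> HG r x y x' y' Gx; split => H.
- apply: (LM_corr1 _ H Gx) => a b c d /HG; tauto.
- apply: (LM_corr1 (G := fun a b c d => G c d a b) _ H Gx) => a b c d /HG.
  move=> [ha [hb [hab [_ [_ [_ Hco]]]]]]; do 3 (split => //).
  apply: corr_mono (corr_sym Hco) => a1 b1 c1 d1 [H1|Hi]; [by left|right].
  by move=> s; rewrite Hi.
Qed.

Lemma fires_corr (w w' : seq Sigma) x y x' y' :
  corr K w w' x y x' y' (fun a b c d => forall s, LM w s a b <-> LM w' s c d) ->
  fires w x y <-> fires w' x' y'.
Proof.
move=> Hco; split => -[c [Hc [Hn Hl]]]; exists c; do 2 (split => //);
  move=> l Hl'.
- by apply: (lit_corr Hco _ (HK Hc Hl') (Hl _ Hl')) => s a b c' d H; exact: (proj1 (H s)).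
- by apply: (lit_corr (corr_sym Hco) _ (HK Hc Hl') (Hl _ Hl')) => s a b c' d H; exact: (proj2 (H s)).
Qed.

End WithK.
End Horn.

Section Inst.
Variables (Sigma : finType) (Phi : incl_horn Sigma) (K : nat).
Hypothesis HK : forall c l, List.In c (clauses Phi) ->
  List.In l (hyps c) -> lit_bnd K l.
Local Notation LM := (@LM _ Phi).
Local Notation fires := (fires Phi).

Lemma upred_eqP (w w' : seq Sigma) U j j' :
  onth w j.-1 = onth w' j'.-1 -> (j == 1) = (j' == 1) ->
  (j == size w) = (j' == size w') -> upred_sat w U j = upred_sat w' U j'.
Proof. by move=> h1 h2 h3; case: U => //= s; rewrite h1. Qed.

Lemma eqb_nat (a b c d : nat) : (a = b <-> c = d) -> (a == b) = (c == d).
Proof. by move=> h; apply/eqP/eqP => /h. Qed.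

Section Prefix.
Variables (w : seq Sigma) (m hi : nat).
Hypothesis Hm : hi + K < m.

Let sz : size (take m w) = minn m (size w).
Proof. by rewrite size_take; case: ltnP; lia. Qed.

Lemma pos_prefix z (a : int) : 1 <= z -> z <= hi -> z <= size w -> (absz a <= K)%N ->
  shift (take m w) z a = shift w z a /\
  forall U, upred_sat w U (shift w z a) = upred_sat (take m w) U (shift w z a).
Proof.
move=> h1 h2 h3; case: a => [k|k] hk; simpl in hk.
- rewrite !shift_pos ?sz //; last by lia.
  split; first by lia.
  move=> U; apply: upred_eqP => //; last by apply: eqb_nat; rewrite sz; lia.
  by rewrite onth_take ifT //; lia.
- rewrite !shift_neg //; split => // U; apply: upred_eqP => //.
  by rewrite onth_take ifT //; lia.
  by apply: eqb_nat; rewrite sz; lia.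
Qed.

Definition Gpre x y x' y' := x' = x /\ y' = y /\ 1 <= x /\ x <= y /\ y <= hi /\ y <= size w.

Lemma prefix_corr x y : Gpre x y x y ->
  corr K w (take m w) x y x y Gpre.
Proof.
move=> [_ [_ [h1 [h2 [h3 h4]]]]].
split; [|split; [|split; [|split]]].
- move=> U a ha; have [-> E] := @pos_prefix x a h1 (leq_trans h2 h3) (leq_trans h2 h4) ha.
  exact: E.
- move=> U a ha; have [-> E] := @pos_prefix y a (leq_trans h1 h2) h3 h4 ha; exact: E.
- by [].
- by [].
- move=> a b ha hb.
  have [-> _] := @pos_prefix x (Posz a) h1 (leq_trans h2 h3) (leq_trans h2 h4) ha.
  split => // hle; rewrite /Gpre; move: hle.
  rewrite shift_pos ?shiftm_E; try lia.
Qed.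

Lemma prefix_LM x y : 1 <= x -> x <= y -> y <= hi -> y <= size w ->
  (forall r, LM w r x y <-> LM (take m w) r x y) /\ (fires w x y <-> fires (take m w) x y).
Proof.
move=> h1 h2 h3 h4.
have HG : forall x y x' y', Gpre x y x' y' ->
     in_dom w x /\ in_dom w y /\ x <= y /\
     in_dom (take m w) x' /\ in_dom (take m w) y' /\ x' <= y' /\
     corr K w (take m w) x y x' y' (fun a b c d => Gpre a b c d \/
                          forall s, LM w s a b <-> LM (take m w) s c d).
  move=> x1 y1 x1' y1' G; have [E1 [E2 [g1 [g2 [g3 g4]]]]] := G; subst x1' y1'.
  rewrite /in_dom sz; do 6 (split; first by lia).
  by apply: corr_mono (prefix_corr G) => *; left.
have LMi : forall r x y, Gpre x y x y -> (LM w r x y <-> LM (take m w) r x y).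
  by move=> r' x1 y1 G; apply: (LM_corr HK HG).
split; first by move=> r; apply: LMi; rewrite /Gpre; lia.
apply: (fires_corr HK).
have G : Gpre x y x y by rewrite /Gpre; lia.
apply: corr_mono (prefix_corr G) => a b c d [-> [-> G']] s.
by apply: LMi; rewrite /Gpre; lia.
Qed.
End Prefix.

Section Suffix.
Variables (w : seq Sigma) (d lo : nat).
Hypothesis Hd : d + K + 1 < lo.

Lemma pos_suffix z (a : int) : lo <= z -> z <= size w -> (absz a <= K)%N ->
  shift (drop d w) (z - d) a = shift w z a - d /\ d + 2 <= shift w z a /\
  forall U, upred_sat w U (shift w z a) = upred_sat (drop d w) U (shift w z a - d).
Proof.
move=> h1 h2; have sz := size_drop d w.
case: a => [k|k] hk; simpl in hk.
- rewrite !shift_pos ?sz; try lia.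
  split; first by lia. split; first by lia.
  move=> U; apply: upred_eqP.
  + by rewrite onth_drop; congr onth; lia.
  + by apply: eqb_nat; lia.
  + by apply: eqb_nat; rewrite sz; lia.
- rewrite !shift_neg; try lia.
  split; first by lia. split; first by lia.
  move=> U; apply: upred_eqP.
  + by rewrite onth_drop; congr onth; lia.
  + by apply: eqb_nat; lia.
  + by apply: eqb_nat; rewrite sz; lia.
Qed.

Definition Gsuf x y x' y' := x' = x - d /\ y' = y - d /\ lo <= x /\ x <= y /\ y <= size w.

Lemma suffix_corr x y : Gsuf x y (x - d) (y - d) ->
  corr K w (drop d w) x y (x - d) (y - d) Gsuf.
Proof.
move=> [_ [_ [h1 [h2 h3]]]].
split; [|split; [|split; [|split]]].
- move=> U a ha; have [-> [_ E]] := @pos_suffix x a h1 (leq_trans h2 h3) ha; exact: E.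
- move=> U a ha; have [-> [_ E]] := @pos_suffix y a (leq_trans h1 h2) h3 ha; exact: E.
- split; lia.
- apply/idP/idP; lia.
- move=> a b ha hb.
  have [-> [E _]] := @pos_suffix x (Posz a) h1 (leq_trans h2 h3) ha.
  move: E; rewrite !shift_pos ?shiftm_E; try lia.
  move=> E; split; first by apply/idP/idP; lia.
  by rewrite /Gsuf; lia.
Qed.

Lemma suffix_LM x y : lo <= x -> x <= y -> y <= size w ->
  (forall r, LM w r x y <-> LM (drop d w) r (x - d) (y - d)) /\
  (fires w x y <-> fires (drop d w) (x - d) (y - d)).
Proof.
move=> h1 h2 h3; have sz := size_drop d w.
have HG : forall x y x' y', Gsuf x y x' y' ->
     in_dom w x /\ in_dom w y /\ x <= y /\
     in_dom (drop d w) x' /\ in_dom (drop d w) y' /\ x' <= y' /\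
     corr K w (drop d w) x y x' y' (fun a b c e => Gsuf a b c e \/
                          forall s, LM w s a b <-> LM (drop d w) s c e).
  move=> x1 y1 x1' y1' G; have [E1 [E2 [g1 [g2 g3]]]] := G; subst x1' y1'.
  rewrite /in_dom sz; do 6 (split; first by lia).
  by apply: corr_mono (suffix_corr G) => *; left.
have LMi : forall r x y, Gsuf x y (x - d) (y - d) ->
    (LM w r x y <-> LM (drop d w) r (x - d) (y - d)).
  by move=> r' x1 y1 G; apply: (LM_corr HK HG).
split; first by move=> r; apply: LMi; rewrite /Gsuf; lia.
apply: (fires_corr HK).
have G : Gsuf x y (x - d) (y - d) by rewrite /Gsuf; lia.
apply: corr_mono (suffix_corr G) => a b c e [-> [-> G']] s.
by apply: LMi; rewrite /Gsuf; lia.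
Qed.
End Suffix.
End Inst.

Section Loc.
Variables (Sigma : finType) (Phi : incl_horn Sigma) (K : nat).
Hypothesis HK : forall c l, List.In c (clauses Phi) ->
  List.In l (hyps c) -> lit_bnd K l.
Local Notation LM := (@LM _ Phi).
Local Notation fires := (fires Phi).
Local Notation N := K.+1.

Definition Wd (v lc rc : seq Sigma) := lc ++ v ++ rc.
Definition nearP v lc rc a b r :=
  a + b < size v /\ LM (Wd v lc rc) r (size lc + 1 + a) (size lc + size v - b).
Definition badP v lc rc := exists x y, size lc < x /\ x <= y /\
  y <= size lc + size v /\ fires (Wd v lc rc) x y.

Lemma size_Wd v lc rc : size (Wd v lc rc) = size lc + size v + size rc.
Proof. by rewrite /Wd !size_cat addnA. Qed.

Lemma init_loc (v : seq Sigma) z lc rc x y :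
  size lc < x -> x <= y -> y <= size lc + size v ->
  (forall r, LM (Wd (rcons v z) lc rc) r x y <-> LM (Wd v lc (take N (z :: rc))) r x y) /\
  (fires (Wd (rcons v z) lc rc) x y <-> fires (Wd v lc (take N (z :: rc))) x y).
Proof.
move=> h1 h2 h3.
have E : Wd v lc (take N (z :: rc)) =
         take (size lc + size v + N) (Wd (rcons v z) lc rc).
  rewrite /Wd -cats1 -catA cat1s take_cat ifF; last by lia.
  rewrite take_cat ifF; last by lia.
  by congr (_ ++ (_ ++ take _ _)); lia.
have Hm : size lc + size v + K < size lc + size v + N by lia.
rewrite E; apply: (@prefix_LM _ Phi K HK _ _ _ Hm); try lia.
by rewrite size_Wd size_rcons; lia.
Qed.

Definition lcx (lc : seq Sigma) s := drop (size lc + 1 - N) (rcons lc s).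

Lemma size_lcx lc s : size (lcx lc s) = size lc + 1 - (size lc + 1 - N).
Proof. by rewrite /lcx size_drop size_rcons addn1. Qed.

Lemma tail_loc (t : seq Sigma) s lc rc x y :
  size lc + 1 < x -> x <= y -> y <= size lc + 1 + size t ->
  let d := size lc + 1 - N in
  (forall r, LM (Wd (s :: t) lc rc) r x y <-> LM (Wd t (lcx lc s) rc) r (x - d) (y - d)) /\
  (fires (Wd (s :: t) lc rc) x y <-> fires (Wd t (lcx lc s) rc) (x - d) (y - d)).
Proof.
move=> h1 h2 h3 d.
have E : Wd t (lcx lc s) rc = drop d (Wd (s :: t) lc rc).
  rewrite /Wd /lcx.
  have -> : lc ++ (s :: t) ++ rc = rcons lc s ++ (t ++ rc) by rewrite -cats1 -catA.
  by rewrite drop_cat ifT // size_rcons; lia.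
rewrite E; case: (posnP d) => d0.
  by rewrite d0 drop0 !subn0.
have Hd : d + K + 1 < size lc + 2 by lia.
apply: (@suffix_LM _ Phi K HK _ _ _ Hd); try lia.
by rewrite size_Wd /=; lia.
Qed.

Lemma near_init v z lc rc a b r : 0 < b ->
  nearP (rcons v z) lc rc a b r <-> nearP v lc (take N (z :: rc)) a b.-1 r.
Proof.
move=> hb; rewrite /nearP size_rcons.
case: (ltnP (a + b) (size v).+1) => hab; last first.
  by split => -[h _]; lia.
have -> : size lc + size v - b.-1 = size lc + (size v).+1 - b by lia.
have L := proj1 (@init_loc v z lc rc (size lc + 1 + a) (size lc + (size v).+1 - b)
  ltac:(lia) ltac:(lia) ltac:(lia)).
by split => -[_ H]; (split; first by lia); apply/(L r).
Qed.

Lemma near_tail t s lc rc a b r : 0 < a ->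
  nearP (s :: t) lc rc a b r <-> nearP t (lcx lc s) rc a.-1 b r.
Proof.
move=> ha; rewrite /nearP /= size_lcx.
case: (ltnP (a + b) (size t).+1) => hab; last first.
  by split => -[h _]; lia.
have L := @tail_loc t s lc rc (size lc + 1 + a) (size lc + (size t).+1 - b).
have -> : size lc + 1 - (size lc + 1 - N) + 1 + a.-1 =
          size lc + 1 + a - (size lc + 1 - N) by lia.
have -> : size lc + 1 - (size lc + 1 - N) + size t - b =
          size lc + (size t).+1 - b - (size lc + 1 - N) by lia.
have L' := proj1 (L ltac:(lia) ltac:(lia) ltac:(lia)).
by split => -[_ H]; (split; first by lia); apply/(L' r).
Qed.

Lemma bad_dec m0 s z lc rc :
  badP (s :: rcons m0 z) lc rc <->
  badP (s :: m0) lc (take N (z :: rc)) \/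
  badP (rcons m0 z) (lcx lc s) rc \/
  fires (Wd (s :: rcons m0 z) lc rc) (size lc + 1) (size lc + size m0 + 2).
Proof.
have szu : size (s :: rcons m0 z) = size m0 + 2 by rewrite /= size_rcons; lia.
split.
- move=> [x [y [h1 [h2 [h3 F]]]]]; rewrite szu in h3.
  case: (ltnP y (size lc + size m0 + 2)) => hy.
    left; exists x, y; do 3 (split; first by rewrite /=; lia).
    by apply/(proj2 (@init_loc (s :: m0) z lc rc x y _ _ _)) => //=; lia.
  case: (ltnP (size lc + 1) x) => hx.
    right; left; pose d := size lc + 1 - N.
    exists (x - d), (y - d); rewrite size_lcx size_rcons.
    do 3 (split; first by lia).
    by apply/(proj2 (@tail_loc (rcons m0 z) s lc rc x y _ _ _)) => //;
      rewrite ?size_rcons; lia.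
  right; right; have -> : size lc + 1 = x by lia.
  by have -> : size lc + size m0 + 2 = y by lia.
- move=> [[x [y [h1 [h2 [h3 F]]]]]|[[x [y [h1 [h2 [h3 F]]]]]|F]].
  + exists x, y; rewrite szu; do 3 (split; first by rewrite /= in h3; lia).
    by apply/(proj2 (@init_loc (s :: m0) z lc rc x y _ _ _)) => //=; lia.
  + pose d := size lc + 1 - N.
    move: h1 h3; rewrite size_lcx size_rcons => h1 h3.
    exists (x + d), (y + d); rewrite szu; do 3 (split; first by lia).
    have L := proj2 (@tail_loc (rcons m0 z) s lc rc (x + d) (y + d) _ _ _).
    rewrite !addnK in L; apply/L => //; rewrite ?size_rcons; lia.
  + exists (size lc + 1), (size lc + size m0 + 2); rewrite szu.
    by do 3 (split; first by lia).
Qed.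
End Loc.

Section Full.
Variables (Sigma : finType) (Phi : incl_horn Sigma) (K : nat).
Hypothesis HK : forall c l, List.In c (clauses Phi) ->
  List.In l (hyps c) -> lit_bnd K l.
Local Notation LM := (@LM _ Phi).
Local Notation fires := (fires Phi).
Local Notation N := K.+1.
Local Notation Mlen := (K + K + 3).
Local Notation nearP := (@nearP _ Phi).

Lemma full_pair (u u' lc rc : seq Sigma) :
  Mlen < size u -> Mlen < size u' -> take Mlen u = take Mlen u' ->
  drop (size u - Mlen) u = drop (size u' - Mlen) u' ->
  (forall a b s, a <= K -> b <= K -> 0 < a + b ->
     (nearP u lc rc a b s <-> nearP u' lc rc a b s)) ->
  (forall r, LM (Wd u lc rc) r (size lc + 1) (size lc + size u) <->
             LM (Wd u' lc rc) r (size lc + 1) (size lc + size u')) /\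
  (fires (Wd u lc rc) (size lc + 1) (size lc + size u) <->
   fires (Wd u' lc rc) (size lc + 1) (size lc + size u')).
Proof.
move=> su su' Etk Edr Hnear.
set W := Wd u lc rc; set W' := Wd u' lc rc.
have sW : size W = size lc + size u + size rc by rewrite size_Wd.
have sW' : size W' = size lc + size u' + size rc by rewrite size_Wd.
have TW : forall v, Mlen <= size v ->
    take (size lc + Mlen) (Wd v lc rc) = lc ++ take Mlen v.
  move=> v hv; rewrite /Wd take_cat ifF; last by lia.
  by rewrite takel_cat; [congr (_ ++ take _ _); lia | lia].
have OL : forall i, i < size lc + Mlen -> onth W i = onth W' i.
  move=> i hi.
  rewrite -[LHS](@ifT _ (i < size lc + Mlen) _ None) // -onth_take.
  rewrite -[RHS](@ifT _ (i < size lc + Mlen) _ None) // -onth_take.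
  by rewrite /W /W' !TW ?Etk //; lia.
have DW : forall v, Mlen <= size v ->
    drop (size lc + size v - Mlen) (Wd v lc rc) = drop (size v - Mlen) v ++ rc.
  move=> v hv; rewrite /Wd drop_cat ifF; last by lia.
  rewrite drop_cat ifT; last by lia.
  by congr (drop _ _ ++ _); lia.
have OR : forall e, onth W (size lc + size u - Mlen + e) =
                    onth W' (size lc + size u' - Mlen + e).
  move=> e; rewrite -!onth_drop /W /W' !DW ?Edr //; lia.
pose G x y x' y' := x = size lc + 1 /\ y = size lc + size u /\
                    x' = size lc + 1 /\ y' = size lc + size u'.
have Hco : corr K W W' (size lc + 1) (size lc + size u) (size lc + 1) (size lc + size u')
   (fun a b c d => G a b c d \/ forall s, LM W s a b <-> LM W' s c d).
  split; [|split; [|split; [|split]]].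
  - move=> U [k0|k0] hk; simpl in hk.
    + rewrite !shift_pos ?sW ?sW'; try lia.
      have -> : minn (size lc + 1 + k0) (size lc + size u + size rc) = size lc + 1 + k0 by lia.
      have -> : minn (size lc + 1 + k0) (size lc + size u' + size rc) = size lc + 1 + k0 by lia.
      apply: upred_eqP => //; first by apply: OL; lia.
      by apply: eqb_nat; rewrite sW sW'; lia.
    + rewrite !shift_neg; try lia.
      apply: upred_eqP => //; first by apply: OL; lia.
      by apply: eqb_nat; rewrite sW sW'; lia.
  - move=> U [k0|k0] hk; simpl in hk.
    + rewrite !shift_pos ?sW ?sW'; try lia.
      apply: upred_eqP.
      * have -> : (minn (size lc + size u + k0) (size lc + size u + size rc)).-1 =
           size lc + size u - Mlen + (Mlen - 1 + minn k0 (size rc)) by lia.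
        have -> : (minn (size lc + size u' + k0) (size lc + size u' + size rc)).-1 =
           size lc + size u' - Mlen + (Mlen - 1 + minn k0 (size rc)) by lia.
        exact: OR.
      * by apply: eqb_nat; lia.
      * by apply: eqb_nat; rewrite sW sW'; lia.
    + rewrite !shift_neg; try lia.
      apply: upred_eqP.
      * have -> : (maxn (size lc + size u - k0.+1) 1).-1 =
           size lc + size u - Mlen + (Mlen - k0 - 2) by lia.
        have -> : (maxn (size lc + size u' - k0.+1) 1).-1 =
           size lc + size u' - Mlen + (Mlen - k0 - 2) by lia.
        exact: OR.
      * by apply: eqb_nat; lia.
      * by apply: eqb_nat; rewrite sW sW'; lia.
  - by lia.
  - by apply/idP/idP; lia.
  - move=> a b ha hb.
    rewrite !shift_pos ?shiftm_E ?sW ?sW'; try lia.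
    have -> : minn (size lc + 1 + a) (size lc + size u + size rc) = size lc + 1 + a by lia.
    have -> : minn (size lc + 1 + a) (size lc + size u' + size rc) = size lc + 1 + a by lia.
    have -> : maxn (size lc + size u - b) 1 = size lc + size u - b by lia.
    have -> : maxn (size lc + size u' - b) 1 = size lc + size u' - b by lia.
    split; first by apply/idP/idP; lia.
    move=> _; case: (posnP (a + b)) => hab.
      by left; rewrite /G; lia.
    right => s; have := Hnear a b s ha hb hab; rewrite /nearP.
    move=> [H1 H2]; split => H.
      by apply: (proj2 (H1 _)); split; [lia | exact H].
    by apply: (proj2 (H2 _)); split; [lia | exact H].
have LMi : forall r, LM W r (size lc + 1) (size lc + size u) <->
                     LM W' r (size lc + 1) (size lc + size u').
  move=> r; apply: (LM_corr HK (G := G)); last by rewrite /G.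
  move=> x y x' y' [-> [-> [-> ->]]]; rewrite /in_dom sW sW'.
  do 6 (split; first by lia).
  exact: Hco.
split => //; apply: (fires_corr HK).
apply: corr_mono Hco => a b c d [[-> [-> [-> ->]]]|] //.
Qed.
End Full.

Definition pb (P : Prop) : bool := if excluded_middle_informative P then true else false.
Lemma pbP (P Q : Prop) : pb P = pb Q -> (P <-> Q).
Proof.
by rewrite /pb; case: excluded_middle_informative => p;
  case: excluded_middle_informative => q // _; tauto.
Qed.
Lemma pb_iff (P Q : Prop) : (P <-> Q) -> pb P = pb Q.
Proof.
by rewrite /pb; case: excluded_middle_informative => p;
  case: excluded_middle_informative => q // H; exfalso; tauto.
Qed.

Section Prof.
Variables (Sigma : finType) (Phi : incl_horn Sigma) (K : nat).
Hypothesis HK : forall c l, List.In c (clauses Phi) ->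
  List.In l (hyps c) -> lit_bnd K l.
Local Notation k := (nrel Phi).
Local Notation N := K.+1.
Local Notation Mlen := (K + K + 3).
Local Notation nearP := (@nearP _ Phi).
Local Notation badP := (badP Phi).

Definition bq n (s : seq Sigma) : n.-bseq Sigma := insub_bseq n s.
Lemma bqE n s : size s <= n -> (bq n s : seq Sigma) = s.
Proof. by move=> h; rewrite /bq /insub_bseq insubdK. Qed.

Definition PT := (Mlen.-bseq Sigma * Mlen.-bseq Sigma *
  {ffun (N.-bseq Sigma * N.-bseq Sigma) -> {ffun ('I_k * 'I_N * 'I_N) -> bool} * bool})%type.

Definition prof (v : seq Sigma) : PT :=
  (bq Mlen (take Mlen v), bq Mlen (drop (size v - Mlen) v),
   [ffun p : N.-bseq Sigma * N.-bseq Sigma =>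
      ([ffun t : 'I_k * 'I_N * 'I_N => pb (nearP v p.1 p.2 t.1.2 t.2 t.1.1)],
       pb (badP v p.1 p.2))]).

Lemma prof_near u u' (lc rc : N.-bseq Sigma) a b r : a < N -> b < N ->
  prof u = prof u' -> (nearP u lc rc a b r <-> nearP u' lc rc a b r).
Proof.
move=> ha hb /(congr1 (fun P : PT => (P.2 (lc, rc)).1 (r, Ordinal ha, Ordinal hb))).
by rewrite !ffunE /=; apply: pbP.
Qed.

Lemma prof_bad u u' (lc rc : N.-bseq Sigma) :
  prof u = prof u' -> (badP u lc rc <-> badP u' lc rc).
Proof.
move=> /(congr1 (fun P : PT => (P.2 (lc, rc)).2)).
by rewrite !ffunE /=; apply: pbP.
Qed.

Lemma prof_pre u u' : prof u = prof u' -> take Mlen u = take Mlen u'.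
Proof.
move=> /(congr1 (fun P : PT => (P.1.1 : seq Sigma))) /=.
by rewrite !bqE // size_take; case: ifP; lia.
Qed.

Lemma prof_suf u u' : prof u = prof u' ->
  drop (size u - Mlen) u = drop (size u' - Mlen) u'.
Proof.
move=> /(congr1 (fun P : PT => (P.1.2 : seq Sigma))) /=.
by rewrite !bqE // size_drop; lia.
Qed.

Lemma size_u' (s : Sigma) m z : size (s :: rcons m z) = (size m).+2.
Proof. by rewrite /= size_rcons. Qed.

Lemma initE (s : Sigma) m z :
  take (size (s :: rcons m z)).-1 (s :: rcons m z) = s :: m.
Proof. by rewrite size_u' /= -cats1 take_size_cat. Qed.

Lemma size_u (s : Sigma) m z : size (s :: rcons m z) = size m + 2.
Proof. by rewrite /= size_rcons; lia. Qed.

Theorem prof_cong u u' : 2 <= size u -> 2 <= size u' ->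
  prof (behead u) = prof (behead u') ->
  prof (take (size u).-1 u) = prof (take (size u').-1 u') -> prof u = prof u'.
Proof.
case: u => [|s t] //; case/lastP: t => [|m0 z] // _.
case: u' => [|s' t'] //; case/lastP: t' => [|m0' z'] // _.
rewrite /= !initE => Ht Hi.
have Pre := prof_pre Hi; have Suf := prof_suf Ht.
move: Suf; rewrite !size_rcons => Suf.
case: (ltnP (size m0).+1 Mlen) => short.
  have E1 : s :: m0 = s' :: m0'.
    move: Pre; rewrite (take_oversize (s := s :: m0)) /=; last by lia.
    case: (ltnP (size m0').+1 Mlen) => sh'.
      by rewrite take_oversize //=; lia.
    move=> E; have := congr1 size E; rewrite size_take /=; case: ifP; lia.
  case: E1 => Es Em; subst s' m0'.
  have e0 : (size m0).+1 - Mlen = 0 by lia.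
  by move: Suf; rewrite e0 !drop0 => E; case: (rcons_inj E) => ->.
have long' : Mlen <= (size m0').+1.
  by have := congr1 size Pre; rewrite !size_take /=; do 2 case: ifP; lia.
have F1 : s = s'.
  have eM : K + K + 3 = (K + K + 2).+1 by lia.
  by move: Pre; rewrite eM /= => -[].
have F2 : z = z'.
  move: Suf; rewrite !drop_rcons; try lia.
  by move=> E; case: (rcons_inj E).
subst s' z'.
have F3 : forall m, Mlen <= (size m).+1 ->
    take Mlen (s :: rcons m z) = take Mlen (s :: m).
  move=> m hm; have -> : s :: rcons m z = (s :: m) ++ [:: z] by rewrite cats1.
  by rewrite takel_cat.
have F4 : forall m, Mlen <= (size m).+1 ->
    drop (size (s :: rcons m z) - Mlen) (s :: rcons m z) =
    drop ((size m).+1 - Mlen) (rcons m z).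
  move=> m hm; rewrite size_u (_ : size m + 2 - Mlen = ((size m).+1 - Mlen).+1) //.
  by lia.
have NF : forall (lc rc : N.-bseq Sigma) a b r, a < N -> b < N -> 0 < a + b ->
    nearP (s :: rcons m0 z) lc rc a b r <-> nearP (s :: rcons m0' z) lc rc a b r.
  move=> lc rc a b r ha hb hab; case: (posnP b) => hb0.
  - have ha0 : 0 < a by lia.
    apply: iff_trans (near_tail HK _ _ _ _ _ _ ha0) _.
    apply: iff_trans _ (iff_sym (near_tail HK _ _ _ _ _ _ ha0)).
    have := prof_near (bq N (lcx K lc s)) rc r _ _ Ht.
    rewrite bqE; last by rewrite size_lcx; lia.
    by apply; lia.
  - apply: iff_trans (near_init HK (s :: m0) _ _ _ _ _ hb0) _.
    apply: iff_trans _ (iff_sym (near_init HK (s :: m0') _ _ _ _ _ hb0)).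
    have := prof_near lc (bq N (take N (z :: rc))) r _ _ Hi.
    rewrite bqE; last by rewrite size_take; case: ifP; lia.
    by apply; lia.
have FP : forall (lc rc : N.-bseq Sigma), _ := fun lc rc =>
  @full_pair _ Phi K HK (s :: rcons m0 z) (s :: rcons m0' z) lc rc
    ltac:(rewrite size_u; lia) ltac:(rewrite size_u; lia)
    ltac:(rewrite !F3 //) ltac:(rewrite !F4 //)
    ltac:(move=> a b r ha hb hab; apply: NF => //; lia).
rewrite /prof !F3 // !F4 // Suf Pre.
congr (_, _); apply/ffunP => p; rewrite !ffunE; congr (_, _).
- apply/ffunP => t; rewrite !ffunE; apply: pb_iff.
  have ha := ltn_ord t.1.2; have hb := ltn_ord t.2.
  case: (posnP (t.1.2 + t.2)) => hab; last exact: NF.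
  have -> : (t.1.2 : nat) = 0 by lia.
  have -> : (t.2 : nat) = 0 by lia.
  rewrite /nearP !addn0 !subn0 !size_u.
  have := (FP p.1 p.2).1 t.1.1; rewrite !size_u => H.
  by split => -[h1 h2]; split; [lia | apply/H | lia | apply/H].
- apply: pb_iff.
  apply: iff_trans (bad_dec HK _ _ _ _ _) _.
  apply: iff_trans _ (iff_sym (bad_dec HK _ _ _ _ _)).
  have B1 := prof_bad p.1 (bq N (take N (z :: p.2))) Hi.
  have B2 := prof_bad (bq N (lcx K p.1 s)) p.2 Ht.
  rewrite bqE in B1; last by rewrite size_take; case: ifP; lia.
  rewrite bqE in B2; last by rewrite size_lcx; lia.
  have B3 := (FP p.1 p.2).2; rewrite !size_u in B3.
  have -> : size p.1 + size m0 + 2 = size p.1 + (size m0 + 2) by lia.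
  have -> : size p.1 + size m0' + 2 = size p.1 + (size m0' + 2) by lia.
  by rewrite /iff; tauto.
Qed.

End Prof.

Lemma seg1 (T : Type) (w : seq T) i s : onth w i = Some s -> drop i (take i.+1 w) = [:: s].
Proof.
elim: w i => [|x w IH] [|i] //=; first by move=> [->]; rewrite take0.
exact: IH.
Qed.

Lemma pbE (Q : Prop) : pb Q <-> Q.
Proof. by rewrite /pb; case: excluded_middle_informative. Qed.

Section Crit.
Variables (Sigma P : finType) (prof : seq Sigma -> P) (L : language Sigma).
Hypothesis cong : forall u u', 2 <= size u -> 2 <= size u' ->
  prof (behead u) = prof (behead u') ->
  prof (take (size u).-1 u) = prof (take (size u').-1 u') -> prof u = prof u'.
Hypothesis accL : forall u u', u <> [::] -> u' <> [::] -> prof u = prof u' -> L u -> L u'.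

Let p0 := prof [::].
Definition dd (p1 p2 : P) : P := epsilon (inhabits p0) (fun p => exists u, 2 <= size u /\
  prof (take (size u).-1 u) = p1 /\ prof (behead u) = p2 /\ prof u = p).
Definition nz (x : option (Sigma + P)) : P :=
  match x with Some (inl s) => prof [:: s] | Some (inr p) => p | None => p0 end.
Definition accb (p : P) : bool := pb (exists u, u <> [::] /\ prof u = p /\ L u).

Lemma inp_inj' : injective (fun s : Sigma => Some (@inl Sigma P s)).
Proof. by move=> a b [<-]. Qed.

Definition Acrit : OCA Sigma :=
  @MkOCA Sigma (option (Sigma + P) : finType) _ inp_inj' (fun x => accb (nz x)) None
    (fun a b => Some (inr (dd (nz a) (nz b)))).

Lemma dd_spec u : 2 <= size u ->
  dd (prof (take (size u).-1 u)) (prof (behead u)) = prof u.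
Proof.
move=> hu; rewrite /dd.
set Q := (fun p => _).
have : Q (epsilon (inhabits p0) Q).
  by apply: epsilon_spec; exists (prof u), u.
by move=> [u' [h1 [h2 [h3 <-]]]]; apply: cong.
Qed.

Lemma cfg_prof (w : seq Sigma) t c : t < c -> c <= size w ->
  nz (cfg Acrit w t c) = prof (drop (c - t).-1 (take c w)).
Proof.
elim: t c => [|t IH] c h1 h2.
- rewrite /= /in_dom ifT; last by lia.
  case E: (onth w c.-1) => [s|].
    by rewrite /= subn0 -(seg1 E) (_ : c.-1.+1 = c) //; lia.
  have H : size w <= c.-1 by rewrite -onthNE E.
  by lia.
- rewrite /= /in_dom ifT; last by lia.
  rewrite /= !IH; try lia.
  set u := drop (c - t.+1).-1 (take c w).
  have su : size u = t.+2 by rewrite size_drop size_take; case: ltnP; lia.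
  rewrite -(@dd_spec u); last by rewrite su.
  congr (dd (prof _) (prof _)).
  + rewrite su /u take_drop take_takel; last by lia.
    by congr (drop _ (take _ _)); lia.
  + rewrite /u -drop1 drop_drop; congr (drop _ _); lia.
Qed.

Lemma crit : exists A : OCA Sigma, forall w, w <> [::] -> (L w <-> oca_accepts A w).
Proof.
exists Acrit => w hw.
have sw : 0 < size w by case: w hw.
rewrite /oca_accepts /= cfg_prof; try lia.
rewrite (_ : (size w - (size w).-1).-1 = 0); last by lia.
rewrite drop0 take_size /accb.
rewrite pbE; split => [H|[u [hu [E H]]]].
  by exists w.
by apply: (accL hu hw E H).
Qed.
End Crit.

Lemma In_mem (T : eqType) (x : T) (s : seq T) : x \in s -> List.In x s.
Proof. elim: s => //= y s IH; rewrite inE => /orP [/eqP ->|/IH]; tauto. Qed.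

Section T2H.
Variables (Sigma : finType) (A : OCA Sigma).
Local Notation S := (state A).
Local Notation k := #|S|.
Local Notation rk := (@enum_rank S).

Definition c_in (s : Sigma) : hclause Sigma k :=
  @HClause Sigma k [:: @LEq Sigma k; @LX Sigma k (UQ s) (Posz 0) true] (Some (rk (@inp _ A s))).
Definition c_del (p q : S) : hclause Sigma k :=
  @HClause Sigma k [:: @LLt Sigma k; @LRel Sigma k (rk p) 0 1; @LRel Sigma k (rk q) 1 0]
    (Some (rk (@delta _ A p q))).
Definition c_rej (q : S) : hclause Sigma k :=
  @HClause Sigma k [:: @LX Sigma k (@Umin Sigma) (Posz 0) true;
     @LY Sigma k (@Umax Sigma) (Posz 0) true; @LRel Sigma k (rk q) 0 0] None.

Definition PhiA : incl_horn Sigma := @InclHorn Sigma k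
  (List.map c_in (enum Sigma) ++
   (List.flat_map (fun p => List.map (c_del p) (enum S)) (enum S) ++
    List.map c_rej (List.filter (fun q => ~~ @accepting _ A q) (enum S)))).

Lemma PhiA_in c : List.In c (clauses PhiA) ->
  (exists s, c = c_in s) \/ (exists p q, c = c_del p q) \/
  (exists q, c = c_rej q /\ ~~ @accepting _ A q).
Proof.
rewrite /= !List.in_app_iff => -[|[]].
- by move=> /List.in_map_iff [s [<- _]]; left; exists s.
- by move=> /List.in_flat_map [p [_ /List.in_map_iff [q [<- _]]]]; right; left; exists p, q.
- move=> /List.in_map_iff [q [<- /List.filter_In [_ h]]]; right; right; exists q; done.
Qed.

Lemma c_in_in s : List.In (c_in s) (clauses PhiA).
Proof. by rewrite /= !List.in_app_iff; left; apply: List.in_map; apply: In_mem; rewrite mem_enum. Qed.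
Lemma c_del_in p q : List.In (c_del p q) (clauses PhiA).
Proof.
rewrite /= !List.in_app_iff; right; left; apply/List.in_flat_map; exists p.
by split; [|apply: List.in_map]; apply: In_mem; rewrite mem_enum.
Qed.
Lemma c_rej_in q : ~~ @accepting _ A q -> List.In (c_rej q) (clauses PhiA).
Proof.
move=> hq; rewrite /= !List.in_app_iff; right; right; apply: List.in_map.
by apply/List.filter_In; split => //; apply: In_mem; rewrite mem_enum.
Qed.

Lemma cfg_S (w : seq Sigma) t c : in_dom w c ->
  cfg A w t.+1 c = @delta _ A (cfg A w t c.-1) (cfg A w t c).
Proof. by move=> h; rewrite /= h. Qed.

Lemma T2H w : w <> [::] -> (models w PhiA <-> oca_accepts A w).
Proof.
move=> hw; have sw : 0 < size w by case: w hw.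
split.
- move=> [R HR].
  have key : forall d x, 1 <= x -> x + d <= size w ->
      R (rk (cfg A w d (x + d))) x (x + d).
    elim=> [|d IH] x h1 h2.
    + rewrite addn0 in h2 *.
      case E: (onth w x.-1) => [s|]; last first.
        have : size w <= x.-1 by rewrite -onthNE E.
        lia.
      have hx : in_dom w x by rewrite /in_dom; lia.
      have := HR x x hx hx (c_in s) (c_in_in s) (leqnn x).
      rewrite /= /in_dom ifT; last by lia.
      rewrite E => H; apply: H => l.
      case=> [<-|[<-|[]]]; first by rewrite /=; reflexivity.
      by rewrite /= /pol E.
    + have hx : in_dom w x by rewrite /in_dom; lia.
      have hy : in_dom w (x + d.+1) by rewrite /in_dom; lia.
      have := HR x (x + d.+1) hx hy (c_del (cfg A w d (x + d)) (cfg A w d (x + d.+1)))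
        (c_del_in _ _) ltac:(lia).
      rewrite /hclause_sat /= hy (_ : (x + d.+1).-1 = x + d); last by lia.
      apply => l /= [<-|[<-|[<-|[]]]] /=; first by lia.
      * rewrite /prd (_ : maxn (x + d.+1).-1 1 = x + d); last by lia.
        split; [apply: IH; lia | lia].
      * rewrite /suc (_ : minn x.+1 (size w) = x + 1); last by lia.
        have := IH (x + 1) ltac:(lia) ltac:(lia).
        by rewrite (_ : x + 1 + d = x + d.+1); [split => //; lia | lia].
  have K1 := key (size w).-1 1 (leqnn 1) ltac:(lia).
  rewrite (_ : 1 + (size w).-1 = size w) in K1; last by lia.
  rewrite /oca_accepts; apply/negPn/negP => hq.
  have hd1 : in_dom w 1 by rewrite /in_dom; lia.
  have hdn : in_dom w (size w) by rewrite /in_dom; lia.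
  have := HR 1 (size w) hd1 hdn _ (c_rej_in hq).
  rewrite /hclause_sat /=; apply; first by lia.
  move=> l [<-|[<-|[<-|[]]]]; rewrite /= /pol //.
- move=> Hacc.
  exists (fun i x y => cfg A w (y - x) y = enum_val i) => x y hx hy c Hc hxy Hl.
  move: hx hy; rewrite /in_dom => hx hy.
  case: (PhiA_in Hc) => [[s Ec]|[[p [q Ec]]|[q [Ec hq]]]]; subst c; rewrite /= in Hl *.
  + have Exy : x = y by apply: (Hl (@LEq Sigma k)); left.
    have := Hl _ (or_intror (or_introl erefl)); rewrite /= /pol => /eqP E.
    subst y; rewrite enum_rankK subnn /= /in_dom ifT; last by lia.
    by rewrite E.
  + have lt : x < y by apply: (Hl (@LLt Sigma k)); left.
    have := Hl _ (or_intror (or_introl erefl)); rewrite /= enum_rankK.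
    rewrite /prd (_ : maxn y.-1 1 = y.-1); last by lia.
    move=> [Hp _].
    have := Hl _ (or_intror (or_intror (or_introl erefl))); rewrite /= enum_rankK.
    rewrite /suc (_ : minn x.+1 (size w) = x + 1); last by lia.
    move=> [Hq _].
    rewrite enum_rankK (_ : y - x = (y - x - 1).+1); last by lia.
    rewrite /= /in_dom ifT; last by lia.
    rewrite (_ : y - x - 1 = y.-1 - x); last by lia.
    rewrite Hp (_ : y.-1 - x = y - (x + 1)); last by lia.
    by rewrite Hq.
  + have := Hl _ (or_introl erefl); rewrite /= /pol => /eqP E1.
    have := Hl _ (or_intror (or_introl erefl)); rewrite /= /pol => /eqP E2.
    have := Hl _ (or_intror (or_intror (or_introl erefl))); rewrite /= enum_rankK.
    move=> [E _]; move: E; rewrite E1 E2 /= (_ : size w - 1 = (size w).-1); last by lia.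
    by move=> E; move: Hacc; rewrite /oca_accepts E (negbTE hq).
Qed.
End T2H.

Lemma models_bad (Sigma : finType) (Phi : incl_horn Sigma) (w : seq Sigma) :
  models w Phi <-> ~ badP Phi w [::] [::].
Proof.
rewrite models_LM /badP /Wd /= cats0; split.
- move=> H [x [y [h1 [h2 [h3 F]]]]]; apply: (H x y) => //; rewrite /in_dom; lia.
- move=> H x y hx hy hxy F; apply: H; exists x, y; move: hx hy; rewrite /in_dom => hx hy.
  by do 3 (split; first by lia).
Qed.

Theorem theorem4 (Sigma : finType) (L : language Sigma) :
  inclESOHORN L <-> Trellis L.
Proof.
split.
- move=> [nL [Phi HP]]; split => //.
  have [K HK] := bound_exists Phi.
  apply: (@crit _ _ (prof Phi K)); first exact: prof_cong HK.
  move=> u u' hu hu' E Lu; apply/HP => //.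
  have := (HP u hu).1 Lu; rewrite !models_bad => nb; apply: contra_not nb.
  have B := prof_bad (bq K.+1 [::]) (bq K.+1 [::]) E.
  by rewrite !bqE in B; [exact: (proj2 B) | done..].
- move=> [nL [A HA]]; split => //; exists (PhiA A) => w hw.
  by apply: iff_trans (HA w hw) _; apply: iff_sym; apply: T2H.
Qed.
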